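(* Let $Q$ be a quantale and $M$ a $Q$-module. (a) $Q$ is precoherent if and only if $Q$ is both algebraic and blooming. (b) If $Q$ is precoherent, then $M$ is precoherent if and only if $M$ is both algebraic and blooming.
   Context: A quantale is a poset $Q$ in which every nonempty subset has a join $\sum$ (no bottom required), with top $1$ and a commutative associative multiplication with unit $1$ distributing over nonempty joins. A $Q$-module is a poset $M$ with all nonempty joins and an associative unital action distributing over nonempty joins in each variable. In a complete semilattice $L$ (all nonempty joins), $c$ is compact if $c\le\sum_{i\in I}x_i$ implies $c\le\sum_{i\in I_0}x_i$ for some finite $I_0\subseteq I$; $K(L)$ is the set of compact elements; $L$ is algebraic if $x=\sum\{c\in K(L):c\le x\}$ for all $x$. $Q$ is precoherent if it is algebraic and $K(Q)$ is closed under multiplication. For precoherent $Q$, $M$ is precoherent if $M$ is algebraic and $cm\in K(M)$ for all $c\in K(Q)$, $m\in K(M)$. Suspension: order nonempty subsets of $L$ by $S\le T$ iff each $s\in S$ is below the join of finitely many elements of $T$; $\Sigma L$ is the poset of equivalence classes; $\sigma_L:\Sigma L\to L$, $S\mapsto\sum S$. $\Sigma Q$ has multiplication $S\cdot T=\{st:s\in S,t\in T\}$ and $\Sigma Q$ acts on $\Sigma M$ by $S\cdot A=\{sa\}$. A left adjoint of $\sigma_L$ is an order-preserving $\sigma_L^\flat:L\to\Sigma L$ with $\sigma_L^\flat(x)\le S\iff x\le\sigma_L(S)$. $Q$ is blooming if $\sigma_Q$ has a left adjoint and $\sigma_Q^\flat(ab)=\sigma_Q^\flat(a)\cdot\sigma_Q^\flat(b)$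 for all $a,b\in Q$. For blooming $Q$, $M$ is blooming if $\sigma_M$ has a left adjoint and $\sigma_M^\flat(qm)=\sigma_Q^\flat(q)\cdot\sigma_M^\flat(m)$ for all $q\in Q$, $m\in M$. *)

(* Defs.v *)
From Stdlib Require Import List.
Import ListNotations.
Set Implicit Arguments.

(** A complete semilattice: a poset in which every NONEMPTY subset has a
    join.  [sup S] is the join of S when S is nonempty (its value on the
    empty set is unconstrained and never used). *)
Record CSL := {
  car :> Type;
  le : car -> car -> Prop;
  le_refl : forall x, le x x;
  le_trans : forall x y z, le x y -> le y z -> le x z;
  le_antisym : forall x y, le x y -> le y x -> x = y;
  sup : (car -> Prop) -> car;
  sup_ub : forall (S : car -> Prop) x, S x -> le x (sup S);
  sup_least : forall (S : car -> Prop) y,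
      (exists x, S x) -> (forall x, S x -> le x y) -> le (sup S) y
}.

Arguments le {c} _ _.
Arguments sup {c} _.

Definition nonempty {T : Type} (S : T -> Prop) : Prop := exists x, S x.

Definition img {A B : Type} (f : A -> B) (S : A -> Prop) : B -> Prop :=
  fun y => exists x, S x /\ y = f x.

(** Quantale: commutative, unit = top, multiplication distributes over
    nonempty joins (one side suffices by commutativity). *)
Record Quantale := {
  qL :> CSL;
  mul : qL -> qL -> qL;
  one : qL;
  mul_assoc : forall a b c, mul a (mul b c) = mul (mul a b) c;
  mul_comm : forall a b, mul a b = mul b a;
  mul_one : forall a, mul one a = a;
  one_top : forall a, le a one;
  mul_sup : forall a (S : qL -> Prop), nonempty S ->
      mul a (sup S) = sup (img (mul a) S)
}.

Record QModule (Q : Quantale) := {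
  mL :> CSL;
  act : Q -> mL -> mL;
  act_assoc : forall (p q : Q) m, act (@mul Q p q) m = act p (act q m);
  act_one : forall m, act (@one Q) m = m;
  act_supr : forall (q : Q) (A : mL -> Prop), nonempty A ->
      act q (sup A) = sup (img (act q) A);
  act_supl : forall (S : Q -> Prop) (m : mL), nonempty S ->
      act (sup S) m = sup (img (fun s => act s m) S)
}.

Arguments act {Q} _ _ _.

Section Generic.
Variable L : CSL.

Definition finsub (l : list L) (S : L -> Prop) : Prop :=
  l <> [] /\ forall x, In x l -> S x.

Definition of_list (l : list L) : L -> Prop := fun x => In x l.

Definition compact (c : L) : Prop :=
  forall S : L -> Prop, nonempty S -> le c (sup S) ->
    exists l, finsub l S /\ le c (sup (of_list l)).

Definition algebraic : Prop :=
  forall x : L, (exists c, compact c /\ le c x) /\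
                x = sup (fun c => compact c /\ le c x).

(** Suspension preorder on nonempty subsets of L; Sigma L is its quotient,
    which we represent by representatives. *)
Definition susp_le (S T : L -> Prop) : Prop :=
  forall s, S s -> exists l, finsub l T /\ le s (sup (of_list l)).

Definition susp_eq (S T : L -> Prop) : Prop := susp_le S T /\ susp_le T S.

(** f : L -> Sigma L is a left adjoint of sigma_L : S |-> sup S *)
Definition left_adjoint_sigma (f : L -> (L -> Prop)) : Prop :=
  (forall x, nonempty (f x)) /\
  (forall x y, le x y -> susp_le (f x) (f y)) /\
  (forall x (S : L -> Prop), nonempty S -> (susp_le (f x) S <-> le x (sup S))).

End Generic.

Arguments compact {L} _.
Arguments left_adjoint_sigma {L} _.
Arguments susp_le {L} _ _.
Arguments susp_eq {L} _ _.
Arguments algebraic L : clear implicits.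

Definition setmul (Q : Quantale) (S T : Q -> Prop) : Q -> Prop :=
  fun u => exists s t, S s /\ T t /\ u = @mul Q s t.

Definition setact (Q : Quantale) (M : QModule Q) (S : Q -> Prop) (A : M -> Prop)
  : M -> Prop :=
  fun u => exists s a, S s /\ A a /\ u = act M s a.

Definition precoherent_Q (Q : Quantale) : Prop :=
  algebraic Q /\
  (forall a b : Q, compact a -> compact b -> compact (@mul Q a b)).

Definition precoherent_M (Q : Quantale) (M : QModule Q) : Prop :=
  algebraic M /\
  (forall (c : Q) (m : M), compact c -> compact m -> compact (act M c m)).

Definition blooming_Q (Q : Quantale) : Prop :=
  exists f : Q -> (Q -> Prop), left_adjoint_sigma f /\
    forall a b : Q, susp_eq (f (@mul Q a b)) (setmul Q (f a) (f b)).

Definition blooming_M (Q : Quantale) (M : QModule Q) : Prop :=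
  exists fQ : Q -> (Q -> Prop), left_adjoint_sigma fQ /\
  exists g : M -> (M -> Prop), left_adjoint_sigma g /\
    forall (q : Q) (m : M), susp_eq (g (act M q m)) (setact M (fQ q) (g m)).

(* Main.v *)
Require Import Defs.
From Stdlib Require Import List.
Import ListNotations.

Definition fb (L : CSL) (x : L) (S : L -> Prop) : Prop :=
  exists l, finsub L l S /\ le x (sup (of_list L l)).

Lemma sup_mono (L : CSL) (A B : L -> Prop) :
  nonempty A -> (forall x, A x -> B x) -> le (sup A) (sup B).
Proof.
  intros HA HAB. apply sup_least; [exact HA|].
  intros x Hx. apply sup_ub. auto.
Qed.

Lemma sup_ext (L : CSL) (A B : L -> Prop) :
  nonempty A -> (forall x, A x <-> B x) -> sup A = sup B.
Proof.
  intros [a Ha] H. apply le_antisym; apply sup_mono.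
  - exists a; auto.
  - intros; apply H; auto.
  - exists a; apply H; auto.
  - intros; apply H; auto.
Qed.

Lemma sup_single (L : CSL) (x : L) : sup (of_list L [x]) = x.
Proof.
  apply le_antisym.
  - apply sup_least. exists x; left; auto.
    intros y [<-|[]]. apply le_refl.
  - apply sup_ub. left; auto.
Qed.

Lemma fb_single (L : CSL) (x : L) (S : L -> Prop) : S x -> fb L x S.
Proof.
  intros Hx. exists [x]. split.
  - split; [discriminate|]. intros y [<-|[]]; auto.
  - rewrite sup_single. apply le_refl.
Qed.

Lemma finsub_le (L : CSL) l (S : L -> Prop) :
  finsub L l S -> le (sup (of_list L l)) (sup S).
Proof.
  intros [Hne Hin]. apply sup_mono; auto.
  destruct l as [|a l]; [congruence|]. exists a; left; auto.
Qed.

Lemma fb_le (L : CSL) (x : L) S : fb L x S -> le x (sup S).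
Proof.
  intros [l [Hl Hx]]. eapply le_trans; [exact Hx|]. apply finsub_le; auto.
Qed.

Lemma list_combine (L : CSL) (U : L -> Prop) (l : list L) :
  l <> [] -> (forall x, In x l -> fb L x U) ->
  exists l', finsub L l' U /\ forall x, In x l -> le x (sup (of_list L l')).
Proof.
  induction l as [|a l IH]; intros Hne H; [congruence|].
  destruct (H a (or_introl eq_refl)) as [la [[Hla1 Hla2] Ha]].
  destruct l as [|b l'].
  - exists la. split; [split; auto|]. intros x [<-|[]]; auto.
  - destruct IH as [lr [[Hlr1 Hlr2] Hr]]; [discriminate| intros; apply H; right; auto|].
    exists (la ++ lr). split.
    + split. destruct la; [congruence|discriminate].
      intros x Hx. apply in_app_or in Hx. destruct Hx; auto.
    + assert (Hm : forall l0, l0 <> [] -> incl l0 (la ++ lr) ->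
                le (sup (of_list L l0)) (sup (of_list L (la ++ lr)))).
      { intros l0 Hl0 Hinc. apply sup_mono.
        destruct l0; [congruence|]. exists c; left; auto.
        intros y Hy. apply Hinc. exact Hy. }
      intros x [<-|Hx].
      * eapply le_trans; [exact Ha|]. apply Hm; auto. apply incl_appl, incl_refl.
      * eapply le_trans; [apply Hr; exact Hx|]. apply Hm; auto. apply incl_appr, incl_refl.
Qed.

Lemma fb_trans (L : CSL) (x : L) T U : fb L x T -> susp_le T U -> fb L x U.
Proof.
  intros [l [[Hne Hin] Hx]] HTU.
  destruct (list_combine L U l Hne) as [l' [Hl' Hle]].
  { intros y Hy. apply HTU. auto. }
  exists l'. split; auto. eapply le_trans; [exact Hx|].
  apply sup_least. destruct l; [congruence|]. exists c; left; auto.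
  exact Hle.
Qed.

Lemma susp_refl (L : CSL) (S : L -> Prop) : susp_le S S.
Proof. intros s Hs. apply fb_single; auto. Qed.

Lemma compact_iff (L : CSL) (f : L -> (L -> Prop)) (c : L) :
  left_adjoint_sigma f -> (compact c <-> fb L c (f c)).
Proof.
  intros [Hne [_ Hadj]]. split.
  - intros Hc. apply Hc; auto. apply (Hadj c (f c) (Hne c)). apply susp_refl.
  - intros H S HS Hle. apply (fb_trans L c (f c) S H). apply Hadj; auto.
Qed.

Definition Kset (L : CSL) (x : L) : L -> Prop := fun c => compact c /\ le c x.

Lemma alg_adj (L : CSL) : algebraic L -> left_adjoint_sigma (Kset L).
Proof.
  intros Halg. split; [|split].
  - intros x. apply Halg.
  - intros x y Hxy c [Hc Hcx]. apply fb_single. split; auto. eapply le_trans; eauto.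
  - intros x S HS. split.
    + intros H. destruct (Halg x) as [Hx Heq]. rewrite Heq.
      apply sup_least; auto. intros c Hc. apply fb_le. apply H; auto.
    + intros H c [Hc Hcx]. apply Hc; auto. eapply le_trans; eauto.
Qed.

Definition setH (A B C : CSL) (h : A -> B -> C) (S : A -> Prop) (T : B -> Prop) : C -> Prop :=
  fun u => exists s t, S s /\ T t /\ u = h s t.

Section Bil.
Variables (A B C : CSL) (h : A -> B -> C).
Hypothesis hl : forall (S : A -> Prop) b, nonempty S -> h (sup S) b = sup (img (fun s => h s b) S).
Hypothesis hr : forall a (T : B -> Prop), nonempty T -> h a (sup T) = sup (img (h a) T).

Lemma h_sup2 S T : nonempty S -> nonempty T -> h (sup S) (sup T) = sup (setH A B C h S T).
Proof.
  intros [s Hs] [t Ht]. rewrite hl by (exists s; auto).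
  apply le_antisym.
  - apply sup_least. exists (h s (sup T)); exists s; auto.
    intros y [s' [Hs' ->]]. rewrite hr by (exists t; auto).
    apply sup_least. exists (h s' t); exists t; auto.
    intros z [t' [Ht' ->]]. apply sup_ub. exists s', t'; auto.
  - apply sup_least. exists (h s t), s, t; auto.
    intros z [s' [t' [Hs' [Ht' ->]]]].
    eapply le_trans; [|apply sup_ub; exists s'; split; [exact Hs'|reflexivity]].
    rewrite hr by (exists t; auto). apply sup_ub. exists t'; auto.
Qed.

Lemma pair_sup (L : CSL) (x y : L) : le x y -> sup (fun z => z = x \/ z = y) = y.
Proof.
  intros H. apply le_antisym.
  - apply sup_least. exists x; auto. intros z [->| ->]; auto using le_refl.
  - apply sup_ub. auto.
Qed.

Lemma h_mono x y x' y' : le x x' -> le y y' -> le (h x y) (h x' y').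
Proof.
  intros H1 H2. apply le_trans with (h x' y).
  - rewrite <- (pair_sup A x x' H1). rewrite hl by (exists x; auto).
    apply sup_ub. exists x; auto.
  - rewrite <- (pair_sup B y y' H2). rewrite hr by (exists y; auto).
    apply sup_ub. exists y; auto.
Qed.

Lemma fb_prod x y S T : fb A x S -> fb B y T -> fb C (h x y) (setH A B C h S T).
Proof.
  intros [la [[Hla1 Hla2] Hx]] [lb [[Hlb1 Hlb2] Hy]].
  set (lp := flat_map (fun s => map (fun t => h s t) lb) la).
  assert (Hlp : forall z, In z lp <-> exists s t, In s la /\ In t lb /\ z = h s t).
  { intros z. unfold lp. rewrite in_flat_map. split.
    - intros [s [Hs Hz]]. apply in_map_iff in Hz. destruct Hz as [t [<- Ht]]. eauto.
    - intros [s [t [Hs [Ht ->]]]]. exists s; split; auto. apply in_map_iff; eauto. }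
  destruct la as [|a la']; [congruence|]. destruct lb as [|b lb']; [congruence|].
  exists lp. split; [split|].
  - intros E. assert (In (h a b) lp) by (apply Hlp; exists a, b; simpl; auto).
    rewrite E in H; destruct H.
  - intros z Hz. apply Hlp in Hz. destruct Hz as [s [t [Hs [Ht ->]]]].
    exists s, t; auto.
  - eapply le_trans; [apply h_mono; eauto|].
    rewrite h_sup2 by (eexists; left; reflexivity).
    apply sup_mono. exists (h a b), a, b; simpl; auto.
    intros z Hz. apply Hlp. destruct Hz as [s [t [Hs [Ht ->]]]]. eauto.
Qed.

Lemma compact_prod fa fb' g a b :
  left_adjoint_sigma fa -> left_adjoint_sigma fb' -> left_adjoint_sigma g ->
  susp_le (setH A B C h (fa a) (fb' b)) (g (h a b)) ->
  compact a -> compact b -> compact (h a b).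
Proof.
  intros Ha Hb Hg Hs ca cb.
  apply (compact_iff C g); auto.
  apply (fb_trans C _ _ _ (fb_prod _ _ _ _ (proj1 (compact_iff A fa a Ha) ca)
                                      (proj1 (compact_iff B fb' b Hb) cb)) Hs).
Qed.

Lemma alg_bloom a b :
  algebraic A -> algebraic B ->
  (forall a b, compact a -> compact b -> compact (h a b)) ->
  susp_eq (Kset C (h a b)) (setH A B C h (Kset A a) (Kset B b)).
Proof.
  intros HA HB Hc. split.
  - intros e [ce Hle]. apply ce.
    + destruct (proj1 (HA a)) as [c Hc1]. destruct (proj1 (HB b)) as [d Hd1].
      exists (h c d), c, d; auto.
    + rewrite <- h_sup2 by (apply HA || apply HB).
      assert (E1 : sup (Kset A a) = a) by (symmetry; apply HA).
      assert (E2 : sup (Kset B b) = b) by (symmetry; apply HB).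
      rewrite E1, E2. exact Hle.
  - intros u [c [d [[cc Hc'] [[cd Hd'] ->]]]]. apply fb_single. split; auto.
    apply h_mono; auto.
Qed.
End Bil.

Lemma Q_hl (Q : Quantale) (S : Q -> Prop) (b : Q) : nonempty S ->
  @mul Q (sup S) b = sup (img (fun s => @mul Q s b) S).
Proof.
  intros HS. rewrite mul_comm, mul_sup by auto.
  destruct HS as [s Hs]. apply sup_ext.
  - exists (mul Q b s), s; auto.
  - intros z; split; intros [x [Hx ->]]; exists x; split; auto; apply mul_comm.
Qed.

Theorem mainTheorem8 (Q : Quantale) (M : QModule Q) :
  (precoherent_Q Q <-> algebraic Q /\ blooming_Q Q) /\
  (precoherent_Q Q -> (precoherent_M M <-> algebraic M /\ blooming_M M)).
Proof.
  assert (hlQ := Q_hl Q). assert (hrQ := @mul_sup Q).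
  assert (hlM := @act_supl Q M). assert (hrM := @act_supr Q M).
  split.
  - split.
    + intros [HA Hc]. split; auto. exists (Kset Q). split.
      * apply alg_adj; auto.
      * intros a b. apply (alg_bloom Q Q Q (@mul Q) hlQ hrQ); auto.
    + intros [HA [f [Hf Hb]]]. split; auto.
      intros a b ca cb.
      apply (compact_prod Q Q Q (@mul Q) hlQ hrQ f f f a b Hf Hf Hf); auto.
      apply (proj2 (Hb a b)).
  - intros [HQ HcQ]. split.
    + intros [HA Hc]. split; auto. exists (Kset Q). split; [apply alg_adj; auto|].
      exists (Kset M). split; [apply alg_adj; auto|].
      intros q m. apply (alg_bloom Q M M (act M) hlM hrM); auto.
    + intros [HA [fQ [HfQ [g [Hg Hb]]]]]. split; auto.
      intros c m cc cm.
      apply (compact_prod Q M M (act M) hlM hrM fQ g g c m HfQ Hg Hg); auto.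
      apply (proj2 (Hb c m)).
Qed.
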